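(* Let $V$ be a vertex operator algebra of central charge $C$ as described in the context, with $d=\dim V^{(1)}>0$, basis $\{u_\alpha\}$ of $V^{(1)}$ and dual basis $\{u^\alpha\}$ ($\langle u^\alpha,u_\beta\rangle=\delta^\alpha_\beta$). For $a,b\in V^{(1)}$ let $F(a,b;x,y)=\sum_\alpha\langle a,Y(u^\alpha,x)Y(u_\alpha,y)b\rangle$, which is (the expansion in $|x|>|y|$ of) a rational function $G(a,b;x,y)/(x^2y^2(x-y)^2)$ with $G$ a homogeneous symmetric polynomial of degree $4$ in $x,y$, written as $$G(a,b;x,y)=P(a,b)x^2y^2+Q(a,b)xy(x-y)^2+R(a,b)(x-y)^4.$$ Then $$P(a,b)=-d\langle a,b\rangle,\qquad Q(a,b)=K(a,b)-2\langle a,b\rangle,\qquad R(a,b)=-\langle a,b\rangle,$$ where $K(a,b)=\mathrm{Tr}_{V^{(1)}}(a_0b_0)$.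
   Context: A vertex operator algebra (VOA) $V=\bigoplus_{k\ge0}V^{(k)}$ is $\mathbb Z$-graded with $\dim V^{(k)}<\infty$, $V^{(0)}=\mathbb C\mathbf 1$, and for each $a\in V^{(k)}$ a vertex operator $Y(a,z)=\sum_{n\in\mathbb Z}a_nz^{-n-k}$ with $a_{-k}\mathbf 1=a$, $Y(\mathbf 1,z)=\mathrm{Id}_V$; there is a conformal vector $\omega\in V^{(2)}$ with $Y(\omega,z)=\sum_nL_nz^{-n-2}$, the $L_n$ satisfying the Virasoro algebra of central charge $C$, $L_0$ acting on $V^{(k)}$ as $k$, $Y(L_{-1}a,z)=\partial_zY(a,z)$, and locality holds. It is assumed that $L_1v=0$ for all $v\in V^{(1)}$ and that $V$ carries the Li–Zamolodchikov metric: the unique symmetric invariant bilinear form with $\langle\mathbf 1,\mathbf 1\rangle=1$ and $\langle Y(e^{zL_1}(-z^{-2})^{L_0}c,1/z)a,b\rangle=\langle a,Y(c,z)b\rangle$ for all $a,b,c\in V$, assumed non-degenerate. $V^{(1)}$ is a Lie algebra under $[a,b]=a_0b$, and $K$ is its Killing form $K(a,b)=\mathrm{Tr}_{V^{(1)}}(\mathrm{ad}(a)\mathrm{ad}(b))$, $\mathrm{ad}(a)=a_0|_{V^{(1)}}$. *)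

(* Defs.v *)
From HB Require Import structures.
From mathcomp Require Import all_boot all_order all_algebra complex.
From mathcomp Require Import Rstruct.
Set Implicit Arguments. Unset Strict Implicit. Unset Printing Implicit Defensive.
Import Order.TTheory GRing.Theory Num.Theory.
Local Open Scope ring_scope.

Notation CC := (Rdefinitions.R[i]).

Definition binz (m : int) (i : nat) : CC :=
  (\prod_(j < i) (m%:~R - j%:R)) / (i`!)%:R.

Section VOA.
Variable V : lmodType CC.
(* Vertex operators are given by their modes, in the standard indexing
   Y(a,z) = sum_n (md a n) z^(-n-1) for every a : V.  For a of weight k the
   paper's mode a_n equals md a (n + k - 1); for weight 1 they coincide. *)
Variables (vac : V) (md : V -> int -> V -> V) (om : V) (cc : CC).

(* Virasoro modes: Y(om,z) = sum_n L_n z^(-n-2) *)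
Definition Lm (n : int) : V -> V := md om (n + 1).

Definition homog (k : nat) (v : V) : Prop := Lm 0 v = k%:R *: v.

Definition is_VOA : Prop :=
  [/\
      (forall a a' n v (k : CC), md (k *: a + a') n v = k *: md a n v + md a' n v)
      /\ (forall a n v v' (k : CC), md a n (k *: v + v') = k *: md a n v + md a n v'),
      (forall a v, exists N : int, forall n : int, N <= n -> md a n v = 0),
      (forall n v, md vac n v = if n == -1 then v else 0),
      (forall a, md a (-1) vac = a) &
   [/\ (forall a (n : int), 0 <= n -> md a n vac = 0) /\
      (* Jacobi / Borcherds identity (all sums are finite: the partial sums
         stabilise, by truncation) *)
      (forall a b c (m n k : int), exists L0 : nat, forall L : nat, (L0 <= L)%N ->
         \sum_(i < L) binz m i *: md (md a (n + i%:Z) b) (m + k - i%:Z) c =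
         \sum_(i < L) ((-1) ^+ i * binz n i) *:
            (md a (m + n - i%:Z) (md b (k + i%:Z) c)
             - ((-1) ^ n) *: md b (n + k - i%:Z) (md a (m + i%:Z) c))),
      (forall (m n : int) v,
         Lm m (Lm n v) - Lm n (Lm m v) =
         (m - n)%:~R *: Lm (m + n) v
         + (if m + n == 0 then ((m ^+ 3 - m)%:~R / 12%:R * cc) *: v else 0)),
      (* translation: Y(L_{-1} a, z) = d/dz Y(a, z) *)
      (forall a (n : int) v, md (Lm (-1) a) n v = - (n%:~R) *: md a (n - 1) v),
      homog 2 om &
   [/\
      (forall v, exists s : seq V,
         (forall k, (k < size s)%N -> homog k (nth 0 s k)) /\
         v = \sum_(k < size s) nth 0 s k),
      (forall k, exists (n : nat) (e : 'I_n -> V), forall v, homog k v ->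
         exists c : 'I_n -> CC, v = \sum_(i < n) c i *: e i) &
      (forall v, homog 0 v -> exists c : CC, v = c *: vac)]]].

Definition L1_kills_V1 : Prop := forall v, homog 1 v -> Lm 1 v = 0.

(* Invariance
     <Y(e^{zL_1}(-z^{-2})^{L_0} c, 1/z) a, b> = <a, Y(c,z) b>
   written out in modes for c of weight k (extends linearly to all c). *)
Definition is_LZ_metric (form : V -> V -> CC) : Prop :=
  [/\ (forall u u' w (k : CC), form (k *: u + u') w = k * form u w + form u' w),
      (forall u w, form u w = form w u),
      form vac vac = 1,
      (forall (k : nat) c a b (n : int), homog k c ->
         form a (md c n b) =
         (-1) ^+ k * \sum_(j < k.+1)
            (j`!%:R)^-1 * form (md (iter j (Lm 1) c) (2 * k%:Z - j%:Z - n - 2) a) b) &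
      (forall v, (forall w, form v w = 0) -> v = 0)].

Definition is_basis_V1 (d : nat) (u : 'I_d -> V) : Prop :=
  [/\ forall i, homog 1 (u i),
      forall c : 'I_d -> CC, \sum_(i < d) c i *: u i = 0 -> forall i, c i = 0 &
      forall v, homog 1 v -> exists c : 'I_d -> CC, v = \sum_(i < d) c i *: u i].

Definition is_trace_V1 (d : nat) (u : 'I_d -> V) (T : V -> V) (t : CC) : Prop :=
  exists M : 'M[CC]_d,
    (forall j, T (u j) = \sum_(i < d) M i j *: u i) /\ \tr M = t.

(* coefficient of x^i y^j in
   F(a,b;x,y) = sum_alpha <a, Y(u^alpha,x) Y(u_alpha,y) b> *)
Definition corrF (form : V -> V -> CC) (d : nat) (u ud : 'I_d -> V) (a b : V)
  : int -> int -> CC :=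
  fun i j => \sum_(al < d) form a (md (ud al) (- i - 1) (md (u al) (- j - 1) b)).

End VOA.

(* Formal two-variable series: s i j = coefficient of x^i y^j (i j : int). *)
(* coefficients of iota_{x,y} (x - y)^(-2) = sum_{k >= 0} (k+1) x^(-k-2) y^k *)
Definition iota_inv_sq : int -> int -> CC :=
  fun i j => if (0 <= j) && (i == - j - 2) then (j + 1)%:~R else 0.

(* bivariate polynomials: G : {poly {poly CC}}, with G`_j`_i the coefficient
   of x^i y^j; the variables: *)
Definition px : {poly {poly CC}} := ('X : {poly CC})%:P.
Definition py : {poly {poly CC}} := 'X.

Definition mulps (G : {poly {poly CC}}) (s : int -> int -> CC) : int -> int -> CC :=
  fun i j => \sum_(jj < size G) \sum_(ii < size G`_jj)
               G`_jj`_ii * s (i - ii%:Z) (j - jj%:Z).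

Definition Gpoly (P Q R : CC) : {poly {poly CC}} :=
  P%:P%:P * px ^+ 2 * py ^+ 2 + Q%:P%:P * px * py * (px - py) ^+ 2
  + R%:P%:P * (px - py) ^+ 4.

(* coefficients of the expansion in |x| > |y| of G/(x^2 y^2 (x-y)^2) *)
Definition expandG (P Q R : CC) : int -> int -> CC :=
  fun i j => mulps (Gpoly P Q R) iota_inv_sq (i + 2) (j + 2).

(* Main.v *)
Require Import Defs.
From HB Require Import structures.
From mathcomp Require Import all_boot all_order all_algebra complex.
From mathcomp Require Import Rstruct.
From mathcomp Require Import ring lra zify.
From Stdlib Require Import FunctionalExtensionality.
Import Order.TTheory GRing.Theory Num.Theory.
Local Open Scope ring_scope.

Lemma sum_widen (T : zmodType) (n N : nat) (FF : nat -> T) :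
  (n <= N)%N -> (forall k, (n <= k)%N -> FF k = 0) ->
  \sum_(k < n) FF k = \sum_(k < N) FF k.
Proof.
move=> nN F0; rewrite -!(big_mkord xpredT) (big_cat_nat (leq0n n) nN) /=.
rewrite [X in _ + X]big_nat_cond [X in _ + X]big1 ?addr0 // => k /andP[/andP[+ _] _].
exact: F0.
Qed.

Definition cfG (P Q R : CC) (jj : nat) : CC :=
  nth 0 [:: R; Q - 4 * R; P - 2 * Q + 6 * R; Q - 4 * R; R] jj.

Lemma Gpoly_eq P Q R : Gpoly P Q R =
  \poly_(jj < 5) \poly_(ii < 5) (if (ii + jj == 4)%N then cfG P Q R jj else 0).
Proof.
rewrite poly_def !big_ord_recr big_ord0 /=.
rewrite !poly_def !big_ord_recr !big_ord0 /= /cfG /=.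
rewrite /Gpoly /px /py.
rewrite -!mul_polyC !rmorphD ?rmorphM /= ?rmorphXn /= ?rmorph0 ?rmorph1.
ring.
Qed.

Definition gval (P Q R : CC) (m : int) : CC :=
  if m <= -2 then 0 else if m == -1 then R else if m == 0 then Q - 2 * R
  else if m == 1 then P + R else m%:~R * P.

Lemma mulps_5 (G : {poly {poly CC}}) (s : int -> int -> CC) (i j : int) :
  (size G <= 5)%N -> (forall jj : nat, leq (size G`_jj) 5) ->
  mulps G s i j = \sum_(jj < 5) \sum_(ii < 5) (G`_jj)`_ii * s (i - ii%:Z) (j - jj%:Z).
Proof.
move=> sG sGj; rewrite /mulps.
rewrite (@sum_widen _ (size G) 5 (fun jj : nat => \sum_(ii < size G`_jj) G`_jj`_ii * s (i - ii%:Z) (j - jj%:Z))) //; last first.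
  by move=> k hk; rewrite nth_default // size_poly0 big_ord0.
apply: eq_bigr => jj _.
rewrite (@sum_widen _ (size G`_jj) 5 (fun ii : nat => G`_jj`_ii * s (i - ii%:Z) (j - jj%:Z))) //.
by move=> k hk; rewrite nth_default // mul0r.
Qed.

Ltac decide_ifs := repeat match goal with |- context [if ?b then _ else _] =>
  first [have -> : b = true by lia | have -> : b = false by lia] end.

Lemma expandG_closed P Q R i j :
  expandG P Q R i j = if i + j == -2 then gval P Q R (j + 1) else 0.
Proof.
rewrite /expandG Gpoly_eq mulps_5; last first.
- move=> jj; rewrite coef_poly; case: ifP => _; last by rewrite size_poly0.
  exact: size_poly.
- exact: size_poly.
rewrite !big_ord_recr !big_ord0 /=.
rewrite !coef_poly /= /cfG /= /iota_inv_sq /gval.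
rewrite ?mul0r ?add0r ?addr0.
case: (i + j =P -2) => hij.
- have -> : i = - j - 2 by lia.
  have [hj|hj] := leP j (-3).
  + decide_ifs. ring.
  have [hj2|hj2] := eqVneq j (-2).
  + subst j. decide_ifs. ring.
  have [hj3|hj3] := eqVneq j (-1).
  + subst j. decide_ifs. ring.
  have [hj4|hj4] := eqVneq j 0.
  + subst j. decide_ifs. ring.
  have [hj5|hj5] := eqVneq j 1.
  + subst j. decide_ifs. ring.
  decide_ifs. ring.
- decide_ifs. ring.
Qed.

Lemma sum_narrow (T : zmodType) (L r : nat) (F : 'I_L -> T) (h : (r <= L)%N) :
  (forall i : 'I_L, (r <= i)%N -> F i = 0) ->
  \sum_(i < L) F i = \sum_(i < r) F (widen_ord h i).
Proof.
move=> F0.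
rewrite (bigID (fun i : 'I_L => (i < r)%N)) /= [X in _ + X]big1 ?addr0; last first.
  by move=> i; rewrite -leqNgt; apply: F0.
by rewrite (big_ord_narrow h).
Qed.

Lemma binz0 m : binz m 0 = 1.
Proof. by rewrite /binz big_ord0 divr1. Qed.

Lemma binz1 m : binz m 1 = m%:~R.
Proof. by rewrite /binz big_ord1 /= subr0 divr1. Qed.

Lemma binz_nat (k i : nat) : (k < i)%N -> binz k%:Z i = 0.
Proof.
move=> ki; rewrite /binz (bigD1 (Ordinal ki)) //= mulrC.
have -> : (k%:Z)%:~R = k%:R :> CC by [].
by rewrite subrr mul0r mulr0.
Qed.

Lemma int_ge2 (m : int) : -2 < m -> m != -1 -> m != 0 -> m != 1 -> 2%:Z <= m.
Proof. lia. Qed.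
Lemma idx1 (i j : int) : i + j = -2 -> - i - 1 = j + 1.
Proof. lia. Qed.
Lemma idx2 (j : int) : - j - 1 = - (j + 1).
Proof. lia. Qed.
Lemma idx3 (i j : int) : i + j <> -2 -> (1 - (- j - 1) - (- i - 1)) != 1%:Z.
Proof. lia. Qed.

Lemma dbl0 (T : zmodType) (x : T) : x = x + x -> x = 0.
Proof. by move=> h; have := congr1 (fun y => y - x) h; rewrite subrr addrK => ->. Qed.

Section VOAproof.
Variable V : lmodType CC.
Variables (vac om : V) (md : V -> int -> V -> V) (cc : CC) (form : V -> V -> CC).
Hypothesis hV : is_VOA vac md om cc.
Hypothesis hL1 : L1_kills_V1 md om.
Hypothesis hform : is_LZ_metric vac md om form.

Local Notation hom := (homog md om).

Lemma mdlin1 a a' n v (k : CC) : md (k *: a + a') n v = k *: md a n v + md a' n v.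
Proof. by case: hV => [[h _] _ _ _ _]; apply: h. Qed.
Lemma mdlin2 a n v v' (k : CC) : md a n (k *: v + v') = k *: md a n v + md a n v'.
Proof. by case: hV => [[_ h] _ _ _ _]; apply: h. Qed.
Lemma md0l n v : md 0 n v = 0.
Proof.
by apply: dbl0; have := mdlin1 0 0 n v 1; rewrite !scale1r addr0; exact.
Qed.
Lemma md0r a n : md a n 0 = 0.
Proof.
by apply: dbl0; have := mdlin2 a n 0 0 1; rewrite !scale1r addr0; exact.
Qed.
Lemma mdZl k a n v : md (k *: a) n v = k *: md a n v.
Proof. by have := mdlin1 a 0 n v k; rewrite !addr0 md0l addr0. Qed.
Lemma mdDl a a' n v : md (a + a') n v = md a n v + md a' n v.
Proof. by have := mdlin1 a a' n v 1; rewrite !scale1r. Qed.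
Lemma mdZr k a n v : md a n (k *: v) = k *: md a n v.
Proof. by have := mdlin2 a n v 0 k; rewrite !addr0 md0r addr0. Qed.
Lemma mdDr a n v v' : md a n (v + v') = md a n v + md a n v'.
Proof. by have := mdlin2 a n v v' 1; rewrite !scale1r. Qed.
Lemma mdNl a n v : md (- a) n v = - md a n v.
Proof. by rewrite -scaleN1r mdZl scaleN1r. Qed.
Lemma mdNr a n v : md a n (- v) = - md a n v.
Proof. by rewrite -scaleN1r mdZr scaleN1r. Qed.
Lemma md_suml (I : Type) (r : seq I) (P : pred I) (F : I -> V) n v :
  md (\sum_(i <- r | P i) F i) n v = \sum_(i <- r | P i) md (F i) n v.
Proof. exact: (big_morph (fun a => md a n v) (fun a b => mdDl a b n v) (md0l n v)). Qed.
Lemma md_sumr (I : Type) (r : seq I) (P : pred I) (F : I -> V) a n :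
  md a n (\sum_(i <- r | P i) F i) = \sum_(i <- r | P i) md a n (F i).
Proof. exact: (big_morph (fun v => md a n v) (fun v w => mdDr a n v w) (md0r a n)). Qed.

Lemma formlin u u' w (k : CC) : form (k *: u + u') w = k * form u w + form u' w.
Proof. by case: hform => h _ _ _ _; apply: h. Qed.
Lemma form_sym u w : form u w = form w u.
Proof. by case: hform => _ h _ _ _; apply: h. Qed.
Lemma form_vac : form vac vac = 1.
Proof. by case: hform. Qed.
Lemma form_nondeg v : (forall w, form v w = 0) -> v = 0.
Proof. by case: hform => _ _ _ _ h; apply: h. Qed.
Lemma form_inv (k : nat) c a b (n : int) : hom k c ->
  form a (md c n b) = (-1) ^+ k * \sum_(j < k.+1)
     (j`!%:R)^-1 * form (md (iter j (Lm md om 1) c) (2 * k%:Z - j%:Z - n - 2) a) b.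
Proof. by case: hform => _ _ _ h _; apply: h. Qed.
Lemma form0l w : form 0 w = 0.
Proof.
by apply: dbl0; have := formlin 0 0 w 1; rewrite !scale1r addr0 !mul1r; exact.
Qed.
Lemma formZl k u w : form (k *: u) w = k * form u w.
Proof. by have := formlin u 0 w k; rewrite addr0 form0l addr0. Qed.
Lemma formDl u u' w : form (u + u') w = form u w + form u' w.
Proof. by have := formlin u u' w 1; rewrite scale1r mul1r. Qed.
Lemma form0r w : form w 0 = 0.
Proof. by rewrite form_sym form0l. Qed.
Lemma formZr k u w : form w (k *: u) = k * form w u.
Proof. by rewrite form_sym formZl form_sym. Qed.
Lemma formDr u u' w : form w (u + u') = form w u + form w u'.
Proof. by rewrite form_sym formDl !(form_sym w). Qed.
Lemma formNr u w : form w (- u) = - form w u.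
Proof. by rewrite -scaleN1r formZr mulN1r. Qed.
Lemma formNl u w : form (- u) w = - form u w.
Proof. by rewrite -scaleN1r formZl mulN1r. Qed.
Lemma form_suml (I : Type) (r : seq I) (P : pred I) (F : I -> V) w :
  form (\sum_(i <- r | P i) F i) w = \sum_(i <- r | P i) form (F i) w.
Proof. exact: (big_morph (fun a => form a w) (fun a b => formDl a b w) (form0l w)). Qed.
Lemma form_sumr (I : Type) (r : seq I) (P : pred I) (F : I -> V) w :
  form w (\sum_(i <- r | P i) F i) = \sum_(i <- r | P i) form w (F i).
Proof. exact: (big_morph (fun a => form w a) (fun a b => formDr a b w) (form0r w)). Qed.

Lemma md_vac n v : md vac n v = if n == -1 then v else 0.
Proof. by case: hV => _ _ h _ _; apply: h. Qed.
Lemma md_m1vac a : md a (-1) vac = a.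
Proof. by case: hV => _ _ _ h _; apply: h. Qed.
Lemma md_posvac a n : 0 <= n -> md a n vac = 0.
Proof. by case: hV => _ _ _ _ [[h _] _ _ _ _]; apply: h. Qed.
Lemma borch a b c (m n k : int) : exists L0 : nat, forall L : nat, (L0 <= L)%N ->
         \sum_(i < L) binz m i *: md (md a (n + i%:Z) b) (m + k - i%:Z) c =
         \sum_(i < L) ((-1) ^+ i * binz n i) *:
            (md a (m + n - i%:Z) (md b (k + i%:Z) c)
             - ((-1) ^ n) *: md b (n + k - i%:Z) (md a (m + i%:Z) c)).
Proof. by case: hV => _ _ _ _ [[_ h] _ _ _ _]; apply: h. Qed.
Lemma vir (m n : int) v :
         Lm md om m (Lm md om n v) - Lm md om n (Lm md om m v) =
         (m - n)%:~R *: Lm md om (m + n) v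
         + (if m + n == 0 then ((m ^+ 3 - m)%:~R / 12%:R * cc) *: v else 0).
Proof. by case: hV => _ _ _ _ [_ h _ _ _]; apply: h. Qed.
Lemma transl a (n : int) v : md (md om 0 a) n v = - (n%:~R) *: md a (n - 1) v.
Proof. by case: hV => _ _ _ _ [_ _ h _ _]; have := h a n v; rewrite /Lm addNr. Qed.
Lemma hom_om : hom 2 om.
Proof. by case: hV => _ _ _ _ [_ _ _ h _]. Qed.
Lemma decomp v : exists s : seq V,
         (forall k, (k < size s)%N -> hom k (nth 0 s k)) /\
         v = \sum_(k < size s) nth 0 s k.
Proof. by case: hV => _ _ _ _ [_ _ _ _ [h _ _]]; apply: h. Qed.
Lemma wt0vac v : hom 0 v -> exists c : CC, v = c *: vac.
Proof. by case: hV => _ _ _ _ [_ _ _ _ [_ _ h]]; apply: h. Qed.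



Lemma inv1 c x y n : hom 1 c -> form x (md c n y) = - form (md c (- n) x) y.
Proof.
move=> hc; rewrite (@form_inv 1%N c x y n hc) big_ord_recr big_ord1 /=.
rewrite (hL1 c hc) md0l form0l mulr0 addr0 expr1 invr1 mul1r mulN1r.
by congr (- form (md c _ x) y); lia.
Qed.


Lemma L1om : Lm md om 1 om = 0.
Proof.
have := vir 1 (-2) vac; rewrite /Lm.
rewrite (_ : -2 + 1 = -1 :> int) // (_ : 1 + 1 = 2 :> int) // (_ : 1 + -2 + 1 = 0 :> int) //.
rewrite (_ : (1 + -2 == 0 :> int) = false) // md_m1vac !md_posvac // md0r.
by rewrite subr0 scaler0 addr0.
Qed.

Lemma sa x v : form x (Lm md om 0 v) = form (Lm md om 0 x) v.
Proof.
rewrite {1}/Lm (@form_inv 2 om x v (0 + 1) hom_om) !big_ord_recr big_ord0 /=.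
rewrite L1om /Lm md0r !md0l !form0l !mulr0 !addr0 add0r expr2 mulN1r opprK mul1r invr1 mul1r.
by congr (form (md om _ x) v); lia.
Qed.

Lemma orth (k : nat) x v (mu : int) : hom k x -> Lm md om 0 v = mu%:~R *: v ->
  mu != k%:Z -> form x v = 0.
Proof.
move=> hk hv hmu; have := sa x v; rewrite hv hk formZr formZl => e.
have : (mu%:~R - k%:R) * form x v = 0 by rewrite mulrBl e subrr.
move/eqP; rewrite mulf_eq0 => /orP[|/eqP//].
rewrite -[k%:R]/((k%:Z)%:~R : CC) -intrB intr_eq0 subr_eq0 => /eqP E.
by rewrite E eqxx in hmu.
Qed.

Lemma negwt v (mu : int) : Lm md om 0 v = mu%:~R *: v -> mu < 0 -> v = 0.
Proof.
move=> hv hmu; apply: form_nondeg => w; rewrite form_sym.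
have [s [hs ->]] := decomp w; rewrite form_suml big1 // => k _.
by apply: (@orth _ _ _ mu (hs _ (ltn_ord k)) hv); lia.
Qed.

Lemma wt0 v : Lm md om 0 v = 0 -> exists c : CC, v = c *: vac.
Proof. by move=> h; apply: wt0vac; rewrite /homog h scale0r. Qed.

Lemma comm0 a b c (m k : int) : exists N : nat, forall L : nat, (N <= L)%N ->
  \sum_(i < L) binz m i *: md (md a i%:Z b) (m + k - i%:Z) c
   = md a m (md b k c) - md b k (md a m c).
Proof.
have [L0 h] := borch a b c m 0 k; exists (maxn L0 1) => L hL.
have h1 : (1 <= L)%N by lia.
rewrite (eq_bigr (fun i : 'I_L => binz m i *: md (md a (0 + i%:Z) b) (m + k - i%:Z) c)); last first.
  by move=> i _; rewrite add0r.
rewrite h; last by lia.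
rewrite (@sum_narrow _ _ _ _ h1); last first.
  by move=> i hi; rewrite binz_nat // mulr0 scale0r.
rewrite big_ord1 /= expr0 binz0 mul1r scale1r expr0z scale1r.
by rewrite !addr0 add0r.
Qed.

Lemma hom1E c : hom 1 c -> md om 1 c = c.
Proof. by rewrite /homog /Lm add0r scale1r. Qed.

Lemma wt_mode c v n (mu : int) : hom 1 c -> Lm md om 0 v = mu%:~R *: v ->
  Lm md om 0 (md c n v) = (mu - n)%:~R *: md c n v.
Proof.
move=> hc hv; have [N hN] := comm0 om c v 1 n.
have := hN (maxn N 2) (leq_maxl _ _).
rewrite (@sum_narrow _ _ _ _ (leq_maxr N 2)); last first.
  by move=> i hi; rewrite binz_nat // scale0r.
rewrite !big_ord_recr big_ord0 /= add0r binz0 binz1 scale1r transl (hom1E c hc).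
have hv' : md om 1 v = mu%:~R *: v by move: hv; rewrite /Lm add0r.
rewrite hv' mdZr => e.
have -> : Lm md om 0 (md c n v) = md om 1 (md c n v) by rewrite /Lm add0r.
have -> : md om 1 (md c n v) = (md om 1 (md c n v) - mu%:~R *: md c n v) + mu%:~R *: md c n v.
  by rewrite subrK.
rewrite -e.
have -> : 1 + n - 0%:Z - 1 = n by lia.
have -> : 1 + n - 1%:Z = n by lia.
rewrite -!scalerDl; congr (_ *: _).
rewrite subr0 !intrD ?intrB ?intrN; ring.
Qed.


Lemma inv1_0 c x y : hom 1 c -> form x (md c 0 y) = - form (md c 0 x) y.
Proof. by move=> hc; rewrite inv1 // oppr0. Qed.

Lemma a1b a b : hom 1 a -> hom 1 b -> md a 1 b = (- form a b) *: vac.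
Proof.
move=> ha hb; have := @wt_mode a b 1 1 ha hb; rewrite subrr scale0r => /wt0 [c hc].
rewrite hc; congr (_ *: _).
have : form vac (md a 1 b) = c by rewrite hc formZr form_vac mulr1.
by rewrite inv1 // md_m1vac => <-.
Qed.

Lemma ai_vanish a b (i : int) : hom 1 a -> hom 1 b -> 2 <= i -> md a i b = 0.
Proof.
move=> ha hb hi; apply: (@negwt _ (1 - i) (@wt_mode a b i 1 ha hb)).
by rewrite subr_lt0 (lt_le_trans _ hi).
Qed.

Lemma hom1_mode0 c v : hom 1 c -> hom 1 v -> hom 1 (md c 0 v).
Proof. by move=> hc hv; have := @wt_mode c v 0 1 hc hv; rewrite subr0. Qed.

Lemma comm_w1 a b c (m k : int) : hom 1 a -> hom 1 b ->
  md a m (md b k c) - md b k (md a m c)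
  = md (md a 0 b) (m + k) c + m%:~R *: md (md a 1 b) (m + k - 1) c.
Proof.
move=> ha hb; have [N hN] := comm0 a b c m k.
rewrite -(hN (maxn N 2) (leq_maxl _ _)).
rewrite (@sum_narrow _ _ _ _ (leq_maxr N 2)); last first.
  move=> i hi; rewrite (@ai_vanish a b i%:Z ha hb) ?md0l ?scaler0 //.
by rewrite !big_ord_recr big_ord0 /= add0r binz0 binz1 scale1r subr0.
Qed.

Lemma fx x y : hom 1 x -> form x y = - form (md x 1 y) vac.
Proof.
by move=> hx; rewrite form_sym -{1}(md_m1vac x) inv1 // opprK.
Qed.

Lemma Wlem x u v : hom 1 x -> hom 1 u -> hom 1 v ->
  form x (md u 0 v) = form (md x 0 u) v.
Proof.
move=> hx hu hv; rewrite fx //.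
have := @comm_w1 x u v 1 0 hx hu.
rewrite (@a1b x v hx hv) mdZr md_posvac // scaler0 subr0 (@a1b x u hx hu) mdZl md_vac /=.
rewrite !scaler0 !addr0 => ->.
by rewrite (@a1b (md x 0 u) v (@hom1_mode0 x u hx hu) hv) formZl form_vac mulr1 opprK.
Qed.

Lemma skew x u v : hom 1 x -> hom 1 u -> hom 1 v ->
  form x (md u 0 v) = - form x (md v 0 u).
Proof.
move=> hx hu hv; rewrite (@Wlem x v u hx hv hu) [form (md x 0 v) u]form_sym.
by rewrite (@inv1_0 x u v hx) -(@Wlem x u v hx hu hv) opprK.
Qed.

Lemma hom_sum (I : Type) (r : seq I) (P : pred I) (F : I -> V) :
  (forall i, hom 1 (F i)) -> hom 1 (\sum_(i <- r | P i) F i).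
Proof.
move=> hF; rewrite /homog /Lm md_sumr scaler_sumr; apply: eq_bigr => i _.
exact: hF.
Qed.

Section Basis.
Variables (d : nat) (u ud : 'I_d -> V).
Hypothesis hu : is_basis_V1 md om u.
Hypothesis hud1 : forall i, hom 1 (ud i).
Hypothesis hud : forall i j, form (ud i) (u j) = if i == j then 1 else 0.

Lemma hu1 i : hom 1 (u i).
Proof. by case: hu. Qed.

Lemma expand y : hom 1 y -> y = \sum_(al < d) form (ud al) y *: u al.
Proof.
case: hu => _ _ hspan hy; have [c ->] := hspan y hy.
apply: eq_bigr => i _; congr (_ *: _).
rewrite form_sumr (bigD1 i) //= formZr hud eqxx mulr1 big1 ?addr0 // => j hj.
by rewrite formZr hud eq_sym (negbTE hj) mulr0.
Qed.

Lemma dual x y : hom 1 x -> form x y = \sum_(al < d) form (ud al) x * form (u al) y.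
Proof.
by move=> hx; rewrite {1}(@expand x hx) form_suml; apply: eq_bigr => i _; rewrite formZl.
Qed.

Lemma wperp c : hom 1 c -> form c (\sum_(al < d) md (ud al) 0 (u al)) = 0.
Proof.
move=> hc.
set S := form c _.
have E : S = \sum_(al < d) \sum_(g < d) form (ud g) (ud al) * form c (md (u g) 0 (u al)).
  rewrite /S form_sumr; apply: eq_bigr => al _.
  rewrite {1}(@expand (ud al) (hud1 al)) md_suml form_sumr; apply: eq_bigr => g _.
  by rewrite mdZl formZr.
have E2 : S = - S.
  rewrite {1}E.
  under eq_bigr => al _ do under eq_bigr => g _ do rewrite (@skew c (u g) (u al) hc (hu1 g) (hu1 al)).
  rewrite exchange_big /= E -sumrN; apply: eq_bigr => g _.
  rewrite -sumrN; apply: eq_bigr => al _.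
  by rewrite mulrN form_sym.
have : S *+ 2 = 0 by rewrite mulr2n {1}E2 addNr.
by move/eqP; rewrite mulrn_eq0 /= => /eqP.
Qed.


Lemma term_ge1 a b (m : int) al : hom 1 a -> hom 1 b ->
  form a (md (ud al) m (md (u al) (- m) b)) =
  form a (md (md (ud al) 0 (u al)) 0 b) - m%:~R * form a b
  + form a (md (u al) (- m) (md (ud al) m b)).
Proof.
move=> ha hb.
have e := @comm_w1 (ud al) (u al) b m (- m) (hud1 al) (hu1 al).
rewrite addrN sub0r (@a1b (ud al) (u al) (hud1 al) (hu1 al)) hud eqxx mdZl md_vac /= in e.
move/eqP: e; rewrite subr_eq => /eqP ->.
by rewrite !formDr !formZr mulN1r mulrN.
Qed.

Lemma wzero a b : hom 1 a -> hom 1 b ->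
  \sum_(al < d) form a (md (md (ud al) 0 (u al)) 0 b) = 0.
Proof.
move=> ha hb; rewrite -form_sumr -md_suml.
have hw := @hom_sum _ (index_enum 'I_d) xpredT (fun al => md (ud al) 0 (u al))
  (fun al => @hom1_mode0 (ud al) (u al) (hud1 al) (hu1 al)).
rewrite (@skew a _ b ha hw hb) (@inv1_0 b a _ hb) opprK.
exact: (@wperp (md b 0 a) (@hom1_mode0 b a hb ha)).
Qed.

Lemma f_le a b (m : int) : hom 1 b -> m <= -2 ->
  \sum_(al < d) form a (md (ud al) m (md (u al) (- m) b)) = 0.
Proof.
move=> hb hm; apply: big1 => al _.
rewrite (@negwt (md (u al) (- m) b) (1 - - m) (@wt_mode (u al) b (- m) 1 (hu1 al) hb)).
  by rewrite md0r form0r.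
by rewrite opprK (le_lt_trans (y := 1 + -2)) // lerD2l.
Qed.

Lemma f_m1 a b : hom 1 a -> hom 1 b ->
  \sum_(al < d) form a (md (ud al) (-1) (md (u al) (- (-1)) b)) = - form a b.
Proof.
move=> ha hb; rewrite opprK (@dual a b ha) -sumrN; apply: eq_bigr => al _.
rewrite (@a1b (u al) b (hu1 al) hb) mdZr md_m1vac formZr.
by rewrite mulNr mulrC form_sym.
Qed.

Lemma f_0 a b K : hom 1 a -> hom 1 b ->
  is_trace_V1 u (fun v => md a 0 (md b 0 v)) K ->
  \sum_(al < d) form a (md (ud al) 0 (md (u al) (- 0) b)) = K.
Proof.
move=> ha hb [M [hM <-]]; rewrite /mxtrace; apply: eq_bigr => al _.
rewrite oppr0.
have hy : hom 1 (md (u al) 0 b) := @hom1_mode0 (u al) b (hu1 al) hb.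
rewrite (@inv1_0 (ud al) a _ (hud1 al)) form_sym (@skew _ (ud al) a hy (hud1 al) ha).
rewrite opprK form_sym.
rewrite (@skew (md a 0 (ud al)) (u al) b (@hom1_mode0 a (ud al) ha (hud1 al)) (hu1 al) hb).
rewrite -(@inv1_0 a (ud al) _ ha) hM form_sumr (bigD1 al) //= formZr hud eqxx mulr1.
rewrite big1 ?addr0 // => j hj.
by rewrite formZr hud eq_sym (negbTE hj) mulr0.
Qed.

Lemma f_1 a b : hom 1 a -> hom 1 b ->
  \sum_(al < d) form a (md (ud al) 1 (md (u al) (- 1) b)) = - (d%:R * form a b) - form a b.
Proof.
move=> ha hb; rewrite (eq_bigr _ (fun al _ => @term_ge1 a b 1 al ha hb)) !big_split /=.
rewrite wzero // add0r sumr_const card_ord.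
congr (_ + _); first by rewrite (_ : 1%:~R = 1 :> CC) // mul1r mulNrn mulr_natl.
rewrite form_sym (@dual b a hb) -sumrN.
apply: eq_bigr => al _.
rewrite (@a1b (ud al) b (hud1 al) hb) mdZr md_m1vac formZr.
by rewrite mulNr (form_sym a).
Qed.

Lemma f_ge2 a b (m : int) : hom 1 a -> hom 1 b -> (2%:Z <= m) ->
  \sum_(al < d) form a (md (ud al) m (md (u al) (- m) b)) = m%:~R * (- (d%:R * form a b)).
Proof.
move=> ha hb hm; rewrite (eq_bigr _ (fun al _ => @term_ge1 a b m al ha hb)) !big_split /=.
rewrite wzero // add0r sumr_const card_ord big1 ?addr0; last first.
  by move=> al _; rewrite (@ai_vanish (ud al) b m (hud1 al) hb hm) md0r form0r.
by rewrite mulNrn mulr_natl mulrN mulrnAr.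
Qed.


Lemma fval a b K (m : int) : hom 1 a -> hom 1 b ->
  is_trace_V1 u (fun v => md a 0 (md b 0 v)) K ->
  \sum_(al < d) form a (md (ud al) m (md (u al) (- m) b)) =
  gval (- (d%:R * form a b)) (K - 2 * form a b) (- form a b) m.
Proof.
move=> ha hb hK; rewrite /gval.
have [hm|hm] := leP m (-2); first exact: f_le.
have [->|h1] := eqVneq m (-1); first exact: f_m1.
have [->|h0] := eqVneq m 0; first by rewrite (@f_0 a b K ha hb hK); ring.
have [->|h2] := eqVneq m 1; first by rewrite f_1.
exact: (@f_ge2 a b m ha hb (int_ge2 m hm h1 h0 h2)).
Qed.

Lemma main_in a b K : hom 1 a -> hom 1 b ->
  is_trace_V1 u (fun v => md a 0 (md b 0 v)) K ->
  corrF md form u ud a b =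
  expandG (- (d%:R * form a b)) (K - 2 * form a b) (- form a b).
Proof.
move=> ha hb hK.
apply: functional_extensionality => i; apply: functional_extensionality => j.
rewrite expandG_closed /corrF; case: (i + j =P -2) => hij.
  rewrite (@idx1 i j hij) idx2.
  exact: fval.
apply: big1 => al _.
apply: (@orth 1 a _ (1 - (- j - 1) - (- i - 1)) ha).
  exact: (@wt_mode (ud al) _ (- i - 1) (1 - (- j - 1)) (hud1 al) (@wt_mode (u al) b (- j - 1) 1 (hu1 al) hb)).
exact: idx3.
Qed.

End Basis.

End VOAproof.

Theorem proposition2 (V : lmodType CC) (vac om : V) (md : V -> int -> V -> V)
  (cc : CC) (form : V -> V -> CC)
  (hV : is_VOA vac md om cc) (hL1 : L1_kills_V1 md om)
  (hform : is_LZ_metric vac md om form)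
  (d : nat) (hd : (0 < d)%N) (u ud : 'I_d -> V)
  (hu : is_basis_V1 md om u)
  (hud1 : forall i, homog md om 1 (ud i))
  (hud : forall i j, form (ud i) (u j) = if i == j then 1 else 0)
  (a b : V) (ha : homog md om 1 a) (hb : homog md om 1 b)
  (K : CC) (hK : is_trace_V1 u (fun v => md a 0 (md b 0 v)) K) :
  corrF md form u ud a b =
  expandG (- (d%:R * form a b)) (K - 2 * form a b) (- form a b).
Proof.
exact: (@main_in V vac om md cc form hV hL1 hform d u ud hu hud1 hud a b K ha hb hK).
Qed.
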